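(* Let $N\ge1$, $h,\varepsilon\in(0,1)$, and let $\Phi$ be the opinion operator defined in the context. Let $P=(p_1,\dots,p_N)$ be a nondecreasing fixed point of $\Phi$ of one of the following two forms, with associated indices $a\le m$: (i) $P=(-1,\dots,-1,0,\dots,0,1,\dots,1)$ with at least one zero entry, where $a$ and $m$ are the first and last indices with $p_k=0$; (ii) there are indices $1\le a\le l<b\le m\le N$ with $p_k=-1$ for $k<a$, $-\varepsilon<p_k<0$ for $a\le k\le l$, $p_k=0$ for $l<k<b$, $0<p_k<\varepsilon$ for $b\le k\le m$, $p_k=1$ for $k>m$, $J(p_k)=\{a,\dots,m\}$ for all $k\in\{a,\dots,m\}$, and $p_a+\dots+p_m=0$. Let $\rho(V,V')=\max_{1\le k\le N}|v_k-v'_k|$ and $\Pi=\{V:\ v_a+\dots+v_m=0\}$. Then there exists $d>0$ such that, with $U=\{V:\rho(V,P)<d\}$, for every $V\in U\setminus\Pi$ with nondecreasing components there exists $n>0$ with $\Phi^n(V)\notin U$.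
   Context: For $V=(v_1,\dots,v_N)\in[-1,1]^N$ and each $k$, let $J(v_k)=\{l\in\{1,\dots,N\}:|v_l-v_k|\le\varepsilon\}$ (computed within the array $V$) and $I(v_k)=|J(v_k)|$. Put $w_k(V)=v_k+\frac{h}{I(v_k)}\sum_{l\in J(v_k)}v_l$. Then $\Phi(V)=(v_1',\dots,v_N')$ where $v_k'=-1$ if $w_k<-1$, $v_k'=1$ if $w_k>1$, and $v_k'=w_k$ if $|w_k|\le1$. *)

(* Defs.v *)
(* R : realType.  Vectors V = (v_1..v_N) are functions 'I_N -> R
   (0-based indices). *)
From HB Require Import structures.
From mathcomp Require Import all_boot all_order all_algebra.
From mathcomp Require Import reals.
Set Implicit Arguments. Unset Strict Implicit. Unset Printing Implicit Defensive.
Import Order.TTheory GRing.Theory Num.Theory.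
Local Open Scope ring_scope.

Section Opinion.
Variables (R : realType) (N : nat) (h eps : R).

Definition Jset (V : 'I_N -> R) (k : 'I_N) : {set 'I_N} :=
  [set l | `|V l - V k| <= eps].

Definition wk (V : 'I_N -> R) (k : 'I_N) : R :=
  V k + h / (#|Jset V k|%:R) * \sum_(l in Jset V k) V l.

Definition clip (x : R) : R :=
  if x < -1 then -1 else if 1 < x then 1 else x.

Definition Phi (V : 'I_N -> R) : 'I_N -> R := fun k => clip (wk V k).

Definition rho (V V' : 'I_N -> R) : R :=
  \big[Num.max/0]_(k < N) `|V k - V' k|.

Definition nondecr (V : 'I_N -> R) : Prop :=
  forall i j : 'I_N, (i <= j)%N -> V i <= V j.

Definition inPi (a m : 'I_N) (V : 'I_N -> R) : Prop :=
  \sum_(k < N | (a <= k <= m)%N) V k = 0.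

Definition formI (P : 'I_N -> R) (a m : 'I_N) : Prop :=
  (forall k, P k = -1 \/ P k = 0 \/ P k = 1) /\
  P a = 0 /\ P m = 0 /\ (forall k, P k = 0 -> (a <= k <= m)%N).

Definition formII (P : 'I_N -> R) (a m : 'I_N) : Prop :=
  exists l b : 'I_N,
    (a <= l)%N /\ (l < b)%N /\ (b <= m)%N /\
        (forall k : 'I_N, (k < a)%N -> P k = -1) /\
        (forall k : 'I_N, (a <= k <= l)%N -> (- eps < P k) && (P k < 0)) /\
        (forall k : 'I_N, (l < k < b)%N -> P k = 0) /\
        (forall k : 'I_N, (b <= k <= m)%N -> (0 < P k) && (P k < eps)) /\
        (forall k : 'I_N, (m < k)%N -> P k = 1) /\
        (forall k : 'I_N, (a <= k <= m)%N ->
            Jset P k = [set i : 'I_N | (a <= i <= m)%N]) /\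
        inPi a m P.

End Opinion.

(* Main.v *)
Require Import Defs.
From HB Require Import structures.
From mathcomp Require Import all_boot all_order all_algebra.
From mathcomp Require Import reals.
From mathcomp Require Import ring lra.
Set Implicit Arguments. Unset Strict Implicit. Unset Printing Implicit Defensive.
Import Order.TTheory GRing.Theory Num.Theory.
Local Open Scope ring_scope.

Lemma grow_unbounded (R : realType) (c x K : R) :
  0 < c -> 0 < x -> exists n : nat, K < x * (1 + c) ^+ n.
Proof.
move=> c0 x0.
have bern : forall n : nat, 1 + n%:R * c <= (1 + c) ^+ n.
  elim=> [|n IH]; first by rewrite expr0 mul0r addr0.
  rewrite exprS -natr1.
  have h1 : 0 <= n%:R * c by apply: mulr_ge0 => //; exact: ltW.
  have h2 : 0 <= c * (n%:R * c) by apply: mulr_ge0 => //; exact: ltW.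
  have h3 : (1 + c) * (1 + n%:R * c) <= (1 + c) * (1 + c) ^+ n.
    by rewrite ler_pM2l // ltr_pwDr.
  apply: le_trans h3. nra.
set y := `|K| / (x * c).
have y0 : 0 <= y by rewrite /y divr_ge0 // mulr_ge0 // ltW.
exists (Num.Def.archi_bound y).
set n := Num.Def.archi_bound y.
have Hn : y < n%:R := archi_boundP y0.
have := bern n.
have hK : K <= `|K| := ler_norm K.
have hy : y * (x * c) = `|K| by rewrite /y mulfVK // mulf_neq0 // gt_eqF.
have hxc : 0 < x * c by apply: mulr_gt0.
move=> hb.
have : x * (1 + n%:R * c) <= x * (1 + c) ^+ n by rewrite ler_pM2l.
nra.
Qed.

Lemma exists_min_pos (R : realType) (I : finType) (f : I -> R) :
  (forall i, 0 < f i) -> exists2 g : R, 0 < g & forall i, g <= f i.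
Proof.
move=> fpos; exists (\big[Num.min/1]_(i : I) f i).
  by apply: (big_ind (fun x => 0 < x)) => // x y hx hy; rewrite lt_min hx hy.
move=> i; rewrite (bigD1 i) //= ge_min lexx //.
Qed.

Lemma avg_le (R : realType) (N : nat) (A T : {set 'I_N}) (f : 'I_N -> R) :
  T \subset A -> T != set0 ->
  (forall x y, x \in T -> y \in A :\: T -> f y <= f x) ->
  (\sum_(i in A) f i) / #|A|%:R <= (\sum_(i in T) f i) / #|T|%:R.
Proof.
move=> sTA nT H.
have Tpos : (0 < #|T|)%N by rewrite card_gt0.
have Apos : (0 < #|A|)%N by apply: leq_trans Tpos (subset_leq_card sTA).
rewrite (big_setID T) /= (setIidPr sTA).
rewrite -(cardsID T A) (setIidPr sTA).
set a := #|T|; set b := #|A :\: T|.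
set sT := \sum_(i in T) f i; set sD := \sum_(i in A :\: T) f i.
have key : a%:R * sD <= b%:R * sT.
  have e1 : \sum_(y in A :\: T) \sum_(x in T) f y = a%:R * sD.
    rewrite mulr_sumr; apply: eq_bigr => y _.
    by rewrite sumr_const mulr_natl.
  have e2 : \sum_(y in A :\: T) \sum_(x in T) f x = b%:R * sT.
    by rewrite sumr_const mulr_natl.
  rewrite -e1 -e2; apply: ler_sum => y hy; apply: ler_sum => x hx.
  exact: H.
have a0 : 0 < a%:R :> R by rewrite ltr0n.
have ab0 : 0 < (a + b)%:R :> R by rewrite ltr0n addn_gt0 Tpos.
rewrite ler_pdivrMr // mulrAC ler_pdivlMr // natrD.
nra.
Qed.

Section Steps.
Variables (R : realType) (N : nat) (h eps : R) (B : {set 'I_N}).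

Lemma stepA (V : 'I_N -> R) :
  (0 < #|B|)%N ->
  (forall k l, k \in B -> l \notin B -> eps < `|V l - V k|) ->
  (forall k l, k \in B -> l \in B -> `|V l - V k| <= eps) ->
  (forall k, k \in B -> Phi h eps V k = wk h eps V k) ->
  \sum_(k in B) Phi h eps V k = (1 + h) * \sum_(k in B) V k.
Proof.
move=> B0 Hsep Hcl Hnc.
have HJ : forall k, k \in B -> Jset eps V k = B.
  move=> k kB; apply/setP => l; rewrite inE.
  case: (boolP (l \in B)) => lB; first by rewrite Hcl.
  by apply/negbTE; rewrite -ltNge Hsep.
rewrite (eq_bigr (fun k => V k + h / #|B|%:R * \sum_(l in B) V l)); last first.
  by move=> k kB; rewrite Hnc // /wk HJ.
rewrite big_split /= sumr_const -mulr_natl.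
have M0 : (#|B|%:R : R) != 0 by rewrite pnatr_eq0 -lt0n.
field.
exact: M0.
Qed.

Lemma stepB (V : 'I_N -> R) (k0 l0 : 'I_N) :
  0 < h -> 0 < eps ->
  (forall k l, k \in B -> l \notin B -> eps < `|V l - V k|) ->
  (forall k, k \in B -> Phi h eps V k = wk h eps V k) ->
  k0 \in B -> l0 \in B -> eps < V k0 - V l0 ->
  exists k l, [/\ k \in B, l \in B &
    (1 + h / #|B|%:R) * (V k0 - V l0) <= Phi h eps V k - Phi h eps V l].
Proof.
move=> h0 e0 Hsep Hnc k0B l0B Ht.
have [k kB Hmax] := arg_maxP V k0B.
have [l lB Hmin] := arg_minP V l0B.
have {}kB : k \in B := kB.
have {}lB : l \in B := lB.
exists k, l; split => //.
have Hk0 : V k0 <= V k := Hmax _ k0B.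
have Hl0 : V l <= V l0 := Hmin _ l0B.
have Hkl : eps < V k - V l by lra.
have kl : k != l by apply/eqP => e; move: Hkl; rewrite e subrr; lra.
set J1 := Jset eps V k; set J2 := Jset eps V l.
have J1s : J1 \subset B :\ l.
  apply/subsetP => x; rewrite /J1 inE => hx; rewrite in_setD1.
  apply/andP; split.
    apply/eqP => e; move: hx; rewrite e ler0_norm; last by lra.
    lra.
  apply: contraT => xB; move: (Hsep _ _ kB xB); lra.
have J2s : J2 \subset B :\ k.
  apply/subsetP => x; rewrite /J2 inE => hx; rewrite in_setD1.
  apply/andP; split.
    apply/eqP => e; move: hx; rewrite e ger0_norm; last by lra.
    lra.
  apply: contraT => xB; move: (Hsep _ _ lB xB); lra.
have J1n : J1 != set0 by apply/set0Pn; exists k; rewrite inE subrr normr0 ltW //; lra.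
have J2n : J2 != set0 by apply/set0Pn; exists l; rewrite inE subrr normr0 ltW //; lra.
have A1 := avg_le (f := V) J1s J1n.
have A2 := avg_le (f := fun i => - V i) J2s J2n.
have {A1} A1 : (\sum_(i in B :\ l) V i) / #|B :\ l|%:R <=
                (\sum_(i in J1) V i) / #|J1|%:R.
  apply: A1 => x y; rewrite !inE => hx /andP [hyJ /andP [hyl hyB]].
  have hyk : V y <= V k := Hmax y hyB.
  move: hyJ; rewrite -ltNge ler0_norm; last by lra.
  move: hx; rewrite ler_norml => /andP [hx1 hx2]; lra.
have {A2} A2 : (\sum_(i in J2) V i) / #|J2|%:R <=
                (\sum_(i in B :\ k) V i) / #|B :\ k|%:R.
  rewrite -lerN2 -!mulNr -!sumrN.
  apply: A2 => x y; rewrite !inE => hx /andP [hyJ /andP [hyl hyB]].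
  have hyk : V l <= V y := Hmin y hyB.
  move: hyJ; rewrite -ltNge ger0_norm; last by lra.
  move: hx; rewrite ler_norml => /andP [hx1 hx2]; lra.
have sl : \sum_(i in B :\ l) V i = \sum_(i in B) V i - V l.
  rewrite (bigD1 l lB) /= addrC addrK; apply: eq_bigl => i; by rewrite !inE andbC.
have sk : \sum_(i in B :\ k) V i = \sum_(i in B) V i - V k.
  rewrite (bigD1 k kB) /= addrC addrK; apply: eq_bigl => i; by rewrite !inE andbC.
have cl : #|B| = (#|B :\ l|).+1 by rewrite (cardsD1 l B) lB.
have ck : #|B :\ k| = #|B :\ l| by apply/eq_add_S; rewrite -cl (cardsD1 k B) kB.
have c1 : (0 < #|B :\ l|)%N by rewrite card_gt0; apply/set0Pn; exists k; rewrite !inE kl kB.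
rewrite sl sk ck cl in A1 A2 *.
rewrite !Hnc // /wk.
set c := (#|B :\ l|%:R : R).
have c0 : 1 <= c by rewrite /c ler1n.
set S := \sum_(i in B) V i.
set a1 := (\sum_(i in J1) V i) / #|J1|%:R.
set a2 := (\sum_(i in J2) V i) / #|J2|%:R.
have e1 : h / #|J1|%:R * \sum_(l in J1) V l = h * a1 by rewrite /a1; ring.
have e2 : h / #|J2|%:R * \sum_(l in J2) V l = h * a2 by rewrite /a2; ring.
rewrite -/J1 -/J2 e1 e2.
set q := (V k - V l) / c.
have eq : q * c = V k - V l by rewrite /q mulfVK // gt_eqF //; lra.
have e3 : (S - V l) / c - (S - V k) / c = q by rewrite /q; field; apply/eqP => e; lra.
rewrite -natr1 -/c.
set r := (V k0 - V l0) / (c + 1).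
have er : (1 + h / (c + 1)) * (V k0 - V l0) = (V k0 - V l0) + h * r
  by rewrite /r; field; apply/eqP => e; lra.
have er2 : r * (c + 1) = V k0 - V l0 by rewrite /r mulfVK //; apply/eqP => e; lra.
rewrite er.
have hrq : r <= q by nra.
have : h * ((S - V l) / c) <= h * a1 by rewrite ler_pM2l.
have : h * a2 <= h * ((S - V k) / c) by rewrite ler_pM2l.
have : h * r <= h * q by rewrite ler_pM2l.
have : h * ((S - V l) / c - (S - V k) / c) = h * q by rewrite e3.
lra.
Qed.
End Steps.

From Stdlib Require Import Classical.

Lemma rho_le (R : realType) (N : nat) (W P : 'I_N -> R) k :
  `|W k - P k| <= rho W P.
Proof. by rewrite /rho (bigD1 k) //= le_max lexx. Qed.

Theorem theorem3 (R : realType) (N : nat) (h eps : R) (P : 'I_N -> R) (a m : 'I_N) :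
  (1 <= N)%N -> 0 < h < 1 -> 0 < eps < 1 ->
  (forall k, Phi h eps P k = P k) ->
  nondecr P ->
  (formI P a m \/ formII eps P a m) ->
  exists2 d : R, 0 < d &
    forall V : 'I_N -> R,
      (forall k, -1 <= V k <= 1) ->
      nondecr V ->
      rho V P < d ->
      ~ inPi a m V ->
      exists n : nat, (0 < n)%N /\ d <= rho (iter n (Phi h eps) V) P.
Proof.
move=> _ /andP [h0 h1] /andP [e0 e1] _ Pnd Hform.
set B := [set k : 'I_N | (a <= k <= m)%N].
have [aB [HPB [HS0 [g g0 Hg]]]] : a \in B /\
   (forall k, k \in B -> - eps < P k < eps) /\
   \sum_(k in B) P k = 0 /\
   exists2 g, 0 < g & forall k l, k \in B -> l \notin B -> eps + g <= `|P l - P k|.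
  case: Hform => [[H3 [Pa [Pm Hz]]] | [lz [b [al [lb [bm [Hlt [Hneg [Hzero [Hpos [Hgt [HJ HPi]]]]]]]]]]]].
    have am : (a <= m)%N by have := Hz a Pa => /andP [].
    have P0 : forall k, k \in B -> P k = 0.
      move=> k; rewrite inE => /andP [hak hkm].
      have := Pnd _ _ hak; have := Pnd _ _ hkm; rewrite Pa Pm; lra.
    split; first by rewrite inE leqnn am.
    split; first by move=> k kB; rewrite P0 //; lra.
    split; first by rewrite big1.
    exists (1 - eps); first lra.
    move=> k l kB lB; rewrite (P0 k kB) subr0.
    have : P l <> 0 by move=> e; move: lB; rewrite inE Hz.
    case: (H3 l) => [->|[->|->]] // _; rewrite ?normrN normr1; lra.
  have am : (a <= m)%N by apply: leq_trans al (leq_trans (ltnW lb) bm).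
  split; first by rewrite inE leqnn am.
  split.
    move=> k; rewrite inE => /andP [hak hkm].
    case: (leqP k lz) => hkl; first by have := Hneg k; rewrite hak hkl => /(_ isT) /andP [? ?]; lra.
    case: (ltnP k b) => hkb; first by rewrite Hzero ?hkl ?hkb //; lra.
    by have := Hpos k; rewrite hkb hkm => /(_ isT) /andP [? ?]; lra.
  split.
    apply: etrans _ HPi; by apply: eq_bigl => k; rewrite inE.
  pose f (p : 'I_N * 'I_N) :=
    if (p.1 \in B) && (p.2 \notin B) then `|P p.2 - P p.1| - eps else 1.
  have fpos : forall p, 0 < f p.
    move=> [k l]; rewrite /f /=; case: ifP => // /andP [kB lB].
    move: kB; rewrite inE => kB.
    have := HJ k kB; move/setP => /(_ l); rewrite !inE.
    move: lB; rewrite inE => /negbTE -> /negbT; rewrite -ltNge subr_gt0 //.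
  have [g g0 Hg] := exists_min_pos fpos.
  exists g => // k l kB lB.
  have := Hg (k, l); rewrite /f /= kB lB /=; lra.
have B0 : (0 < #|B|)%N by rewrite card_gt0; apply/set0Pn; exists a.
set d := Num.min (g / 4) (1 - eps).
have d0 : 0 < d by rewrite lt_min divr_gt0 //=; lra.
have dg : d <= g / 4 by rewrite ge_min lexx.
have de : d <= 1 - eps by rewrite ge_min lexx orbT.
exists d => // V _ _ Hr HnPi.
apply: NNPP => Hno.
pose Vn n := iter n (Phi h eps) V.
have Hin : forall n k, `|Vn n k - P k| < d.
  move=> [|n] k; first exact: le_lt_trans (rho_le _ _ _) Hr.
  apply: le_lt_trans (rho_le _ _ _) _.
  rewrite ltNge; apply/negP => H; apply: Hno; by exists n.+1.
have Hsep : forall n k l, k \in B -> l \notin B -> eps < `|Vn n l - Vn n k|.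
  move=> n k l kB lB.
  have := Hg k l kB lB; have := Hin n k; have := Hin n l.
  have := ler_distD (Vn n l) (P l) (P k).
  have := ler_distD (Vn n k) (Vn n l) (P k).
  rewrite (distrC (P l) (Vn n l)).
  lra.
have Hnc : forall n k, k \in B -> Phi h eps (Vn n) k = wk h eps (Vn n) k.
  move=> n k kB; have := Hin n.+1 k; have := HPB k kB.
  rewrite /= /Phi /clip.
  case: ifP => _; first by rewrite ltr_norml; lra.
  case: ifP => _ //; by rewrite ltr_norml; lra.
have Hbd : forall n k l, k \in B -> l \in B -> Vn n k - Vn n l < 4.
  move=> n k l kB lB; have := Hin n k; have := Hin n l.
  have := HPB k kB; have := HPB l lB; rewrite !ltr_norml; lra.
have [[n0 [k0 [l0 [k0B l0B Ht]]]] | Hno2] :=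
  classic (exists n k l, [/\ k \in B, l \in B & eps < Vn n k - Vn n l]).
  set c := h / #|B|%:R.
  have c0 : 0 < c by rewrite divr_gt0 // ltr0n.
  set t := Vn n0 k0 - Vn n0 l0.
  have grow : forall j, exists k l, [/\ k \in B, l \in B &
        t * (1 + c) ^+ j <= Vn (j + n0)%N k - Vn (j + n0)%N l].
    elim=> [|j [k [l [kB lB H]]]].
      by exists k0, l0; split => //; rewrite expr0 mulr1.
    have ge1 : 1 <= (1 + c) ^+ j by rewrite exprn_ege1 // lerDl ltW.
    have tt : t <= t * (1 + c) ^+ j by rewrite ler_peMr // ltW // (lt_trans e0 Ht).
    have [k' [l' [k'B l'B H']]] := stepB h0 e0 (Hsep (j + n0)%N) (Hnc (j + n0)%N) kB lB
       (lt_le_trans Ht (le_trans tt H)).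
    exists k', l'; split => //.
    rewrite addSn /= -/(Vn (j + n0)%N) exprS.
    apply: le_trans H'.
    rewrite -/c mulrCA ler_pM2l //; lra.
  have [j Hj] := grow_unbounded 4 c0 (lt_trans e0 Ht).
  have [k [l [kB lB H]]] := grow j.
  move: Hj; rewrite -/t => Hj.
  have := Hbd (j + n0)%N k l kB lB; lra.
have Hcl : forall n k l, k \in B -> l \in B -> `|Vn n l - Vn n k| <= eps.
  move=> n k l kB lB.
  have H1 : Vn n k - Vn n l <= eps.
    rewrite leNgt; apply/negP => H; apply: Hno2; by exists n, k, l.
  have H2 : Vn n l - Vn n k <= eps.
    rewrite leNgt; apply/negP => H; apply: Hno2; by exists n, l, k.
  rewrite ler_norml; lra.
pose S n := \sum_(k in B) Vn n k.
have HSn : forall n, S n = (1 + h) ^+ n * S 0%N.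
  elim=> [|n IH]; first by rewrite expr0 mul1r.
  rewrite exprS -mulrA -IH /S /=.
  exact: stepA B0 (Hsep n) (Hcl n) (Hnc n).
have HSb : forall n, `|S n| <= #|B|%:R * d.
  move=> n.
  have -> : S n = \sum_(k in B) (Vn n k - P k) by rewrite sumrB HS0 subr0.
  apply: le_trans (ler_norm_sum _ _ _) _.
  apply: (@le_trans _ _ (\sum_(k in B) d)).
    by apply: ler_sum => k _; exact: ltW (Hin n k).
  by rewrite sumr_const mulr_natl.
have S00 : S 0%N != 0.
  apply/eqP => E; apply: HnPi; rewrite /inPi; apply: etrans _ E; rewrite /S /=.
  by apply: eq_bigl => k; rewrite inE.
have S0p : 0 < `|S 0%N| by rewrite normr_gt0.
have [n Hn] := grow_unbounded (#|B|%:R * d) h0 S0p.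
have := HSb n; rewrite HSn normrM ger0_norm ?exprn_ge0 //; last lra.
rewrite mulrC; lra.
Qed.
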